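(* Let $l$ be an even integer with $l\ge6$, and consider all strings $x\in B$ with $|x|=l$ and $\delta(x)=2$. Then: - if $l=4n$ (so $n\ge2$), the maximum of $s([x]_2)$ over these strings is $F_{4n}+F_{2n}^2$, attained at $x=(10)^n0(10)^{n-1}0$; - if $l=4n+2$ (so $n\ge1$), the maximum of $s([x]_2)$ over these strings is $F_{4n+2}+F_{2n}F_{2n+2}$, attained at $x=(10)^n0(10)^n0$.
   Context: Stern's sequence $(a(n))_{n\ge0}$: $a(0)=0$, $a(1)=1$, $a(2n)=a(n)$, $a(2n+1)=a(n)+a(n+1)$; $s(n)=a(n+1)$. For a binary string $x$, $[x]_2$ is the integer it represents in base 2 and $|x|$ its length. $B$ denotes the set of nonempty binary strings that are concatenations of blocks each equal to $10$ or $100$; for $x\in B$, $\delta(x)$ is the number of $0$s minus the number of $1$s in $x$, which equals the number of $100$ blocks. $x^i$ denotes $i$-fold concatenation. $F_n$ are the Fibonacci numbers ($F_0=0,F_1=1,F_n=F_{n-1}+F_{n-2}$). *)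

(* Defs.v *)
From mathcomp Require Import all_boot.
From mathcomp Require Import all_algebra.
Set Implicit Arguments. Unset Strict Implicit. Unset Printing Implicit Defensive.

(* Binary strings: seq bool, true = 1, false = 0, most significant bit first. *)

Fixpoint stern_fuel (k n : nat) : nat :=
  match k with
  | 0 => 0
  | k'.+1 =>
      if n == 0 then 0 else if n == 1 then 1 else
      if odd n then stern_fuel k' n./2 + stern_fuel k' (n./2).+1
      else stern_fuel k' n./2
  end.

Definition stern (n : nat) : nat := stern_fuel n.+1 n.

Definition stern_s (n : nat) : nat := stern n.+1.

Definition binval (x : seq bool) : nat := foldl (fun acc (b : bool) => acc.*2 + b) 0 x.

Inductive inB : seq bool -> Prop :=
  | inB10 : inB [:: true; false]
  | inB100 : inB [:: true; false; false]
  | inBcat x y : inB x -> inB y -> inB (x ++ y).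

Definition delta (x : seq bool) : int :=
  (count (fun b : bool => ~~ b) x)%:Z - (count id x)%:Z.

Fixpoint fib (n : nat) : nat :=
  match n with
  | 0 => 0
  | 1 => 1
  | (m.+1 as p).+1 => fib p + fib m
  end.

Definition rep10 (n : nat) : seq bool := flatten (nseq n [:: true; false]).

(* Main.v *)
From Stdlib Require Import ZArith Lia.
Require Import Defs.
From mathcomp Require Import all_boot all_algebra.
From mathcomp Require Import zify.
Lemma stern_fuel_eq k1 k2 n : n < k1 -> n < k2 -> stern_fuel k1 n = stern_fuel k2 n.
Proof.
elim: k1 k2 n => [|k1 IH] [|k2] n //= h1 h2.
case: eqP => // hn0; case: eqP => // hn1.
have h2n : n./2 < n by rewrite ltn_half_double; lia.
case: ifP => ho.
- have h3 : (n./2).+1 < n.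
    have := odd_double_half n; rewrite ho /= => e; lia.
  by rewrite (IH k2) ?(IH k2 (n./2).+1); lia.
- by rewrite (IH k2); lia.
Qed.

Lemma stern_fuel_ok k n : n < k -> stern_fuel k n = stern n.
Proof. by move=> h; apply: stern_fuel_eq. Qed.

Lemma stern_fuel_S k n : stern_fuel k.+1 n =
  if n == 0 then 0 else if n == 1 then 1 else
      if odd n then stern_fuel k n./2 + stern_fuel k (n./2).+1
      else stern_fuel k n./2.
Proof. by []. Qed.

Lemma stern_dbl n : stern n.*2 = stern n.
Proof.
case: n => [//|n].
rewrite {1}/stern stern_fuel_S.
have -> : (n.+1).*2 = n.*2.+2 by lia.
rewrite (_ : odd n.*2.+2 = false); last by rewrite /= negbK odd_double.
rewrite (_ : (n.*2.+2 == 0) = false) // (_ : (n.*2.+2 == 1) = false) //.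
have -> : (n.*2.+2)./2 = n.+1 by rewrite -[n.*2.+2]/((n.+1).*2) doubleK.
by apply: stern_fuel_ok; lia.
Qed.

Lemma stern_dbl1 n : stern n.*2.+1 = stern n + stern n.+1.
Proof.
case: n => [//|n].
rewrite {1}/stern stern_fuel_S.
have -> : (n.+1).*2 = n.*2.+2 by lia.
rewrite (_ : odd n.*2.+3 = true); last by rewrite /= negbK odd_double.
rewrite (_ : (n.*2.+3 == 0) = false) // (_ : (n.*2.+3 == 1) = false) //.
have -> : (n.*2.+3)./2 = n.+1 by rewrite /= uphalf_double.
rewrite !stern_fuel_ok //; lia.
Qed.

Definition stp (s : nat * nat) (b : bool) : nat * nat :=
  if b then (s.1 + s.2, s.2) else (s.1, s.1 + s.2).
Definition run s x := foldl stp s x.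

Lemma stern_state x : (stern (binval x), stern (binval x).+1) = run (0,1) x.
Proof.
elim/last_ind: x => [//|x b IH].
rewrite /run /binval !foldl_rcons -/(binval x) -/(run (0,1) x) -IH /stp /=.
case: b => /=.
- by rewrite addn1 stern_dbl1 -doubleS stern_dbl.
- by rewrite addn0 stern_dbl stern_dbl1.
Qed.

Definition F n : Z := Z.of_nat (fib n).
Lemma FS n : F n.+2 = Z.add (F n.+1) (F n).
Proof. rewrite /F /=; lia. Qed.
Lemma F0 : F 0 = Z0. Proof. by []. Qed.
Lemma F1 : F 1 = (Zpos xH). Proof. by []. Qed.
Lemma F2 : F 2 = (Zpos xH). Proof. by []. Qed.
Fixpoint sg n : Z := match n with 0 => (Zpos xH) | S m => Z.opp (sg m) end.

Lemma cassini n : Z.sub (Z.mul (F n.+1) (F n.+1)) (Z.mul (F n) (F n.+2)) = sg n.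
Proof.
elim: n => [|n IH]; first by [].
rewrite /= -IH (FS n.+1) (FS n); ring.
Qed.

Lemma gfib n j : Z.sub (Z.mul (F n.+1) (F (n + j))) (Z.mul (F n) (F (n + j).+1)) = Z.mul (sg n) (F j).
Proof.
suff: Z.sub (Z.mul (F n.+1) (F (n + j))) (Z.mul (F n) (F (n + j).+1)) = Z.mul (sg n) (F j) /\
      Z.sub (Z.mul (F n.+1) (F (n + j.+1))) (Z.mul (F n) (F (n + j.+1).+1)) = Z.mul (sg n) (F j.+1) by case.
elim: j => [|j [IH1 IH2]].
  rewrite addn0 addn1 -cassini /F /=; split; lia.
split => //.
move: IH1 IH2; rewrite !addnS (FS j) (FS (n+j).+1) (FS (n + j)); lia.
Qed.

Lemma vajda n i j : Z.sub (Z.mul (F (n + i)) (F (n + j))) (Z.mul (F n) (F (n + i + j))) = Z.mul (Z.mul (sg n) (F i)) (F j).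
Proof.
suff: Z.sub (Z.mul (F (n + i)) (F (n + j))) (Z.mul (F n) (F (n + i + j))) = Z.mul (Z.mul (sg n) (F i)) (F j) /\
      Z.sub (Z.mul (F (n + i.+1)) (F (n + j))) (Z.mul (F n) (F (n + i.+1 + j))) = Z.mul (Z.mul (sg n) (F i.+1)) (F j) by case.
elim: i => [|i [IH1 IH2]].
  rewrite !addn0 addn1 addSn; have := gfib n j; rewrite /F /=; split; lia.
split => //.
move: IH1 IH2; rewrite !addnS !addSn (FS i) (FS (n+i)) (FS (n + i + j)); lia.
Qed.

Lemma fib_add m n : F (m + n).+1 = Z.add (Z.mul (F m.+1) (F n.+1)) (Z.mul (F m) (F n)).
Proof.
suff: F (m + n).+1 = Z.add (Z.mul (F m.+1) (F n.+1)) (Z.mul (F m) (F n)) /\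
      F (m.+1 + n).+1 = Z.add (Z.mul (F m.+2) (F n.+1)) (Z.mul (F m.+1) (F n)) by case.
elim: m => [|m [IH1 IH2]].
  rewrite !add0n add1n (FS n) F0 F1 F2; split; lia.
split => //.
move: IH1 IH2; rewrite !addSn (FS (m + n).+1) (FS m.+1) (FS m); nia.
Qed.

Lemma sg_even m : sg (2 * m) = (Zpos xH).
Proof.
elim: m => [//|m IH].
have -> : 2 * m.+1 = (2 * m).+2 by lia.
by rewrite /= IH; lia.
Qed.

Lemma catalan m k : fib (2 * m) * fib (2 * m + k + k) + fib k * fib k = fib (2 * m + k) * fib (2 * m + k).
Proof.
have := vajda (2 * m) k k; rewrite sg_even /F; lia.
Qed.

Lemma fib_add_nat m n : fib (m + n).+1 = fib m.+1 * fib n.+1 + fib m * fib n.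
Proof. have := fib_add m n; rewrite /F; lia. Qed.

Lemma fibSS k : fib k.+2 = fib k.+1 + fib k. Proof. by []. Qed.

Lemma fib_mono k : fib k <= fib k.+1.
Proof. case: k => [|k] //; rewrite fibSS; lia. Qed.

Lemma fib_pos k : 0 < k -> 0 < fib k.
Proof.
elim: k => [//|k IH] _; case: k IH => [//|k] IH.
have := IH erefl; rewrite fibSS; lia.
Qed.

Lemma run_cat s a b : run s (a ++ b) = run (run s a) b.
Proof. by rewrite /run foldl_cat. Qed.

Lemma run_false a b t : run (a,b) (false :: t) = run (a, a+b) t.
Proof. by []. Qed.
Lemma run_false1 a b : run (a,b) [:: false] = (a, a+b).
Proof. by []. Qed.

Lemma rep10S' n : rep10 n.+1 = rep10 n ++ [:: true; false].
Proof.
elim: n => [//|n IH].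
rewrite -[rep10 n.+2]/([:: true; false] ++ rep10 n.+1) {1}IH.
by rewrite catA.
Qed.

Lemma rep10D m n : rep10 (m + n) = rep10 m ++ rep10 n.
Proof.
elim: m => [//|m IH].
rewrite addSn -[rep10 (m+n).+1]/([:: true; false] ++ rep10 (m+n)) IH.
by [].
Qed.

Lemma size_rep10 n : size (rep10 n) = 2 * n.
Proof.
elim: n => [//|n IH].
rewrite -[rep10 n.+1]/([:: true; false] ++ rep10 n) size_cat IH /=; lia.
Qed.

Lemma run_rep10 p u v : run (u,v) (rep10 p.+1) =
  (fib (2*p).+1 * u + fib (2*p).+2 * v, fib (2*p).+2 * u + fib (2*p).+3 * v).
Proof.
elim: p u v => [|p IH] u v.
  rewrite /run /= /stp /=; congr pair; lia.
rewrite -[rep10 p.+2]/([:: true; false] ++ rep10 p.+1) run_cat (_ : run (u,v) [:: true; false] = (u+v, u+v+v)) // IH.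
have -> : 2 * p.+1 = (2*p).+2 by lia.
rewrite (fibSS (2*p).+3) (fibSS (2*p).+2) (fibSS (2*p).+1).
congr pair; nia.
Qed.

Lemma valV p q : (run (0,1) (rep10 p.+1 ++ [:: false] ++ rep10 q.+1 ++ [:: false])).2
  = fib (2*p+2*q+6) + fib (2*p+2) * fib (2*q+4).
Proof.
rewrite (run_cat _ (rep10 p.+1)) run_rep10 run_false (run_cat _ (rep10 q.+1)) run_rep10 run_false1.
cbn [fst snd].
have e := fib_add_nat (2*p).+3 (2*q).+2.
have -> : 2*p+2*q+6 = ((2*p).+3 + (2*q).+2).+1 by lia.
have -> : 2*p+2 = (2*p).+2 by lia.
have -> : 2*q+4 = (2*q).+4 by lia.
rewrite e (fibSS (2*q).+2) (fibSS (2*q).+1) (fibSS (2*p).+2) (fibSS (2*p).+1).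
nia.
Qed.

Lemma shiftL c y : y.1 <= y.2 ->
  (run y (false :: rep10 c)).2 <= (run y (rep10 c ++ [:: false])).2.
Proof.
case: c => [|c] hy; first by [].
case: y hy => y1 y2 hy; cbn [fst snd] in hy.
rewrite run_false run_rep10 run_cat run_rep10 run_false1; cbn [fst snd].
rewrite (fibSS (2*c).+1).
have := leq_mul (leqnn (fib (2*c).+2)) hy.
nia.
Qed.

Lemma valB p q c : (run (0,1) (rep10 p.+1 ++ [:: false] ++ rep10 q.+1 ++ [:: false] ++ rep10 c)).2
  <= fib (2*p+2*(q+c)+6) + fib (2*p+2) * fib (2*(q+c)+4).
Proof.
rewrite -valV.
have -> : rep10 p.+1 ++ [:: false] ++ rep10 q.+1 ++ [:: false] ++ rep10 c =
   (rep10 p.+1 ++ [:: false] ++ rep10 q.+1) ++ false :: rep10 c by rewrite -!catA.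
have -> : rep10 p.+1 ++ [:: false] ++ rep10 (q + c).+1 ++ [:: false] =
   (rep10 p.+1 ++ [:: false] ++ rep10 q.+1) ++ (rep10 c ++ [:: false]).
  by rewrite -addSn rep10D -!catA.
rewrite (run_cat _ _ (false :: _)) (run_cat _ _ (rep10 c ++ _)).
apply: shiftL.
rewrite (run_cat _ (rep10 p.+1)) run_rep10 run_false run_rep10; cbn [fst snd].
apply: leq_add; apply: leq_mul => //; apply: fib_mono.
Qed.

Definition blk (b : bool) : seq bool := if b then [:: true; false; false] else [:: true; false].

Lemma inB_blocks x : inB x -> exists bs, x = flatten (map blk bs).
Proof.
elim=> [|| x1 y1 _ [b1 ->] _ [b2 ->]]; first by exists [:: false].
  by exists [:: true].
by exists (b1 ++ b2); rewrite map_cat flatten_cat.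
Qed.

Lemma counts bs : count id (flatten (map blk bs)) = size bs /\
  count (fun b : bool => ~~ b) (flatten (map blk bs)) = size bs + count id bs.
Proof.
elim: bs => [//|b bs [h1 h2]].
rewrite (_ : flatten (map blk (b :: bs)) = blk b ++ flatten (map blk bs)) //.
rewrite !count_cat h1 h2; case: b => /=; lia.
Qed.

Lemma count_split bs n : count id bs = n.+1 ->
  exists i rest, bs = nseq i false ++ true :: rest /\ count id rest = n.
Proof.
elim: bs => [//|b bs IH]; case: b => /= h.
  by exists 0, bs; split => //; lia.
have [i [rest [-> hr]]] := IH h.
by exists i.+1, rest.
Qed.

Lemma count0 bs : count id bs = 0 -> bs = nseq (size bs) false.
Proof. elim: bs => [//|[] bs IH] //= h; by rewrite -IH. Qed.

Lemma flat_nseq i : flatten (map blk (nseq i false)) = rep10 i.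
Proof. by rewrite map_nseq. Qed.

Lemma shapeB x : inB x -> delta x = Posz 2 ->
  exists i j k, x = rep10 i.+1 ++ [:: false] ++ rep10 j.+1 ++ [:: false] ++ rep10 k.
Proof.
move=> /inB_blocks [bs ->]; rewrite /delta.
have [-> ->] := counts bs => hd.
have hc : count id bs = 2 by lia.
have [i [r1 [-> h1]]] := count_split _ _ hc.
have [j [r2 [-> h2]]] := count_split _ _ h1.
rewrite (count0 _ h2).
exists i, j, (size r2).
rewrite !map_cat !flatten_cat !flat_nseq.
rewrite (_ : flatten (map blk (true :: nseq j false ++ true :: nseq (size r2) false)) =
  [:: true; false; false] ++ rep10 j ++ [:: true; false; false] ++ rep10 (size r2)); last first.
  by rewrite /= map_cat flatten_cat flat_nseq /= flat_nseq.
by rewrite !rep10S' -!catA.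
Qed.

Lemma inB_pre i y : inB y -> inB (rep10 i ++ y).
Proof.
move=> hy; elim: i => [//|i IH].
rewrite -[rep10 i.+1]/([:: true; false] ++ rep10 i) -catA.
exact: inBcat inB10 IH.
Qed.

Lemma inB_rep i : inB (rep10 i.+1).
Proof. rewrite rep10S'; exact: inB_pre _ _ inB10. Qed.

Lemma inB_100 k : inB ([:: true; false; false] ++ rep10 k).
Proof. case: k => [|k]; first exact: inB100. exact: inBcat inB100 (inB_rep k). Qed.

Lemma inB_shape i j k : inB (rep10 i.+1 ++ [:: false] ++ rep10 j.+1 ++ [:: false] ++ rep10 k).
Proof.
rewrite !rep10S' -!catA.
apply: inB_pre.
exact: (inBcat inB100 (inB_pre j _ (inB_100 k))).
Qed.

Lemma count_rep10 n : count id (rep10 n) = n /\ count (fun b : bool => ~~ b) (rep10 n) = n.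
Proof.
elim: n => [//|n [h1 h2]].
rewrite -[rep10 n.+1]/([:: true; false] ++ rep10 n) !count_cat h1 h2 /=; lia.
Qed.

Lemma value x : stern_s (binval x) = (run (0,1) x).2.
Proof. by rewrite -stern_state. Qed.

Lemma prodE u w : fib (2*u) * fib (2*w) + (odd (u + w) : nat) <= fib (u+w) * fib (u+w).
Proof.
wlog le : u w / u <= w.
  move=> H; case: (leqP u w) => h; first exact: H.
  rewrite mulnC (addnC u w); apply: H; lia.
have := catalan u (w - u).
rewrite (_ : 2*u + (w-u) + (w-u) = 2*w); last by lia.
rewrite (_ : 2*u + (w-u) = u+w); last by lia.
case ho: (odd (u + w)) => /=; last by lia.
have hk : 0 < w - u.
  case: (ltnP 0 (w - u)) => // h0.
  have ew : w = u by lia.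
  by move: ho; rewrite ew addnn odd_double.
have := fib_pos _ hk => hp.
have := leq_mul hp hp; lia.
Qed.

Lemma delta_x0 a b : delta (rep10 a ++ [:: false] ++ rep10 b ++ [:: false]) = Posz 2.
Proof.
have [c1 c2] := count_rep10 a; have [c3 c4] := count_rep10 b.
rewrite /delta (count_cat _ (rep10 a)) (count_cat _ [:: false]) (count_cat _ (rep10 b)).
rewrite (count_cat _ (rep10 a)) (count_cat _ [:: false]) (count_cat _ (rep10 b)).
rewrite c1 c2 c3 c4 (_ : count id [:: false] = 0) // (_ : count (fun b : bool => ~~ b) [:: false] = 1) //.
lia.
Qed.

Lemma size_x0 a b : size (rep10 a ++ [:: false] ++ rep10 b ++ [:: false]) = 2 * a + 2 * b + 2.
Proof.
rewrite (size_cat (rep10 a)) (size_cat [:: false]) (size_cat (rep10 b)) !size_rep10.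
rewrite (_ : size [:: false] = 1) //; lia.
Qed.

Lemma size_sh i j k : size (rep10 i.+1 ++ [:: false] ++ rep10 j.+1 ++ [:: false] ++ rep10 k) = 2 * i + 2 * j + 2 * k + 6.
Proof.
rewrite (size_cat (rep10 i.+1)) (size_cat [:: false]) (size_cat (rep10 j.+1)) (size_cat [:: false]) !size_rep10.
rewrite (_ : size [:: false] = 1) //; lia.
Qed.

Theorem mainTheorem9 (l : nat) :
  ~~ odd l -> 6 <= l ->
  (forall n : nat, l = 4 * n ->
     let x0 := rep10 n ++ [:: false] ++ rep10 n.-1 ++ [:: false] in
     [/\ inB x0, size x0 = l, delta x0 = Posz 2,
         stern_s (binval x0) = fib (4 * n) + fib (2 * n) ^ 2 &
         forall x : seq bool, inB x -> size x = l -> delta x = Posz 2 ->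
           stern_s (binval x) <= fib (4 * n) + fib (2 * n) ^ 2])
  /\
  (forall n : nat, l = 4 * n + 2 ->
     let x0 := rep10 n ++ [:: false] ++ rep10 n ++ [:: false] in
     [/\ inB x0, size x0 = l, delta x0 = Posz 2,
         stern_s (binval x0) = fib (4 * n + 2) + fib (2 * n) * fib (2 * n + 2) &
         forall x : seq bool, inB x -> size x = l -> delta x = Posz 2 ->
           stern_s (binval x) <= fib (4 * n + 2) + fib (2 * n) * fib (2 * n + 2)]).
Proof.
move=> hodd hl; split => n hn.
- case: n hn => [|[|p]] hn; try lia.
  rewrite [(p.+2).-1]/=.
  split.
  + exact: (inB_shape p.+1 p 0).
  + rewrite size_x0; lia.
  + exact: delta_x0.
  + rewrite value (valV p.+1 p) -mulnn.
    have -> : 2 * p.+1 + 2 * p + 6 = 4 * p.+2 by lia.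
    have -> : 2 * p.+1 + 2 = 2 * p.+2 by lia.
    have -> : 2 * p + 4 = 2 * p.+2 by lia.
    by [].
  + move=> x hB hs hd.
    have [i [j [k ex]]] := shapeB x hB hd.
    move: hs; rewrite ex value => hs.
    have := valB i j k.
    move: hs; rewrite size_sh => hs.
    have -> : 2 * i + 2 * (j + k) + 6 = 4 * p.+2 by lia.
    have -> : 2 * i + 2 = 2 * (i + 1) by lia.
    have -> : 2 * (j + k) + 4 = 2 * (j + k + 2) by lia.
    have := prodE (i + 1) (j + k + 2).
    have -> : i + 1 + (j + k + 2) = 2 * p.+2 by lia.
    rewrite -mulnn; lia.
- case: n hn => [|p] hn; first lia.
  split.
  + exact: (inB_shape p p 0).
  + rewrite size_x0; lia.
  + exact: delta_x0.
  + rewrite value (valV p p).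
    have -> : 2 * p + 2 * p + 6 = 4 * p.+1 + 2 by lia.
    have -> : 2 * p + 2 = 2 * p.+1 by lia.
    have -> : 2 * p + 4 = 2 * p.+1 + 2 by lia.
    by [].
  + move=> x hB hs hd.
    have [i [j [k ex]]] := shapeB x hB hd.
    move: hs; rewrite ex value => hs.
    have := valB i j k.
    move: hs; rewrite size_sh => hs.
    have -> : 2 * i + 2 * (j + k) + 6 = 4 * p.+1 + 2 by lia.
    have -> : 2 * i + 2 = 2 * (i + 1) by lia.
    have -> : 2 * (j + k) + 4 = 2 * (j + k + 2) by lia.
    have := prodE (i + 1) (j + k + 2).
    have -> : i + 1 + (j + k + 2) = (2 * p.+1).+1 by lia.
    rewrite (_ : odd (2 * p.+1).+1 = true); last by rewrite -[(2 * p.+1).+1]/(1 + 2 * p.+1) oddD oddM.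
    have := catalan p.+1 1.
    rewrite (_ : 2 * p.+1 + 1 + 1 = 2 * p.+1 + 2); last by lia.
    rewrite (_ : 2 * p.+1 + 1 = (2 * p.+1).+1); last by lia.
    rewrite [fib 1]/=.
    lia.
Qed.
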